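(* Let $G\in\mathrm{C}^1(\mathbb{R})$ be coercive and $V\in\mathrm{Lip}(\mathbb{R})$ be $1$-periodic. For all $\theta_1,\theta_2\in\mathbb{R}$ with $\theta_1<\theta_2$, we have $f_{\theta_1}(x)<f_{\theta_2}(x)$ for all $x\in\mathbb{R}$.
   Context: $G$ coercive means $G(p)\to\infty$ as $p\to\pm\infty$. For each $\theta\in\mathbb{R}$, $f_\theta\in\mathrm{C}^1(\mathbb{R})$ denotes the unique $1$-periodic function such that $\int_0^1 f_\theta(x)dx=\theta$ and, for some (unique) constant $\overline{H}(\theta)\in\mathbb{R}$, $f_\theta'(x)+G(f_\theta(x))+V(x)=\overline{H}(\theta)$ for all $x\in\mathbb{R}$. *)

(* Defs.v *)
From Stdlib Require Import Reals.
From Coquelicot Require Import Coquelicot.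
Open Scope R_scope.

Definition is_C1 (f : R -> R) : Prop :=
  forall x, ex_derive f x /\ continuous (Derive f) x.

Definition coercive (G : R -> R) : Prop :=
  filterlim G (Rbar_locally p_infty) (Rbar_locally p_infty) /\
  filterlim G (Rbar_locally m_infty) (Rbar_locally p_infty).

Definition lipschitz (V : R -> R) : Prop :=
  exists L : R, forall x y, Rabs (V x - V y) <= L * Rabs (x - y).

Definition periodic1 (f : R -> R) : Prop := forall x, f (x + 1) = f x.

Definition is_f_theta (G V : R -> R) (theta : R) (f : R -> R) : Prop :=
  is_C1 f /\ periodic1 f /\ RInt f 0 1 = theta /\
  exists Hbar : R, forall x, Derive f x + G (f x) + V x = Hbar.

(* Main.v *)
Require Import Defs.
From Stdlib Require Import Reals Lra ZArith Classical.
From Coquelicot Require Import Coquelicot.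
Open Scope R_scope.

Lemma h_deriv y : is_derive (fun y => Rmax y 0 ^ 2) y (2 * Rmax y 0).
Proof.
destruct (Rtotal_order y 0) as [Hy|[Hy|Hy]].
- apply is_derive_ext_loc with (fun _ => 0).
  + exists (mkposreal _ (Ropp_0_gt_lt_contravar _ Hy)). intros t Ht.
    unfold ball in Ht; simpl in Ht; unfold AbsRing_ball, abs, minus, plus, opp in Ht; simpl in Ht.
    apply Rabs_def2 in Ht. rewrite Rmax_right by lra. simpl; ring.
  + rewrite Rmax_right by lra. auto_derive; auto; ring.
- subst y. apply is_derive_Reals. intros eps Heps. exists (mkposreal eps Heps).
  intros k Hk0 Hk. simpl in Hk. rewrite Rplus_0_l. rewrite (Rmax_left 0 0) by lra.
  unfold Rmax; destruct (Rle_dec k 0).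
  + replace ((0^2 - 0^2)/k - 2*0) with 0 by (field; auto). rewrite Rabs_R0; lra.
  + replace ((k^2 - 0^2)/k - 2*0) with k by (field; auto). auto.
- apply is_derive_ext_loc with (fun t => t ^ 2).
  + exists (mkposreal _ Hy). intros t Ht.
    unfold ball in Ht; simpl in Ht; unfold AbsRing_ball, abs, minus, plus, opp in Ht; simpl in Ht.
    apply Rabs_def2 in Ht. rewrite Rmax_left by lra. reflexivity.
  + rewrite Rmax_left by lra. auto_derive; auto. ring.
Qed.
Lemma lemK (w dw : R -> R) (a L : R) :
  (forall x, is_derive w x (dw x)) -> w a <= 0 ->
  (forall x, a <= x <= a + 1 -> 0 < w x -> dw x <= L * w x) ->
  forall x, a <= x <= a + 1 -> w x <= 0.
Proof.
intros Hd Ha HL x Hx.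
set (phi := fun t => Rmax (w t) 0 ^ 2 * exp (- (2 * L) * t)).
set (dphi := fun t => 2 * Rmax (w t) 0 * dw t * exp (- (2 * L) * t)
     + Rmax (w t) 0 ^ 2 * (- (2 * L) * exp (- (2 * L) * t))).
assert (Hphi : forall t, is_derive phi t (dphi t)).
{ intro t. unfold phi, dphi.
  apply (is_derive_mult (fun t => Rmax (w t) 0 ^ 2) (fun t => exp (- (2 * L) * t))).
  - pose proof (is_derive_comp (fun y => Rmax y 0 ^ 2) w t _ _ (h_deriv (w t)) (Hd t)) as H.
    simpl in H. unfold scal in H; simpl in H; unfold mult in H; simpl in H.
    replace (2 * Rmax (w t) 0 * dw t) with (dw t * (2 * Rmax (w t) 0)) by ring. exact H.
  - auto_derive; auto. ring.
  - intros; apply Rmult_comm. }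
assert (Hneg : forall t, a <= t <= a + 1 -> dphi t <= 0).
{ intros t Ht. unfold dphi. pose proof (exp_pos (- (2 * L) * t)) as He.
  destruct (Rlt_or_le 0 (w t)) as [Hw|Hw].
  - rewrite Rmax_left by lra. specialize (HL t Ht Hw).
    assert (0 <= 2 * w t * exp (- (2 * L) * t) * (L * w t - dw t)).
    { apply Rmult_le_pos; [|lra]. apply Rmult_le_pos; [|lra]. lra. }
    nra.
  - rewrite Rmax_right by lra. lra. }
destruct (MVT_gen phi a x dphi) as [c [Hc Heq]].
- intros t Ht. apply Hphi.
- intros t Ht. apply continuity_pt_filterlim. apply (ex_derive_continuous phi).
  exists (dphi t). apply Hphi.
- rewrite Rmin_left in Hc by lra. rewrite Rmax_right in Hc by lra.
  assert (Hc2 : dphi c <= 0) by (apply Hneg; lra).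
  assert (Hpa : phi a = 0) by (unfold phi; rewrite Rmax_right by lra; ring).
  assert (Hpx : phi x <= 0) by nra.
  unfold phi in Hpx. pose proof (exp_pos (- (2 * L) * x)) as He.
  destruct (Rlt_or_le 0 (w x)) as [Hw|Hw]; auto.
  rewrite Rmax_left in Hpx by lra.
  assert (0 < w x ^ 2 * exp (- (2 * L) * x)) by (apply Rmult_lt_0_compat; nra).
  lra.
Qed.
Lemma per_nat f : periodic1 f -> forall (n : nat) x, f (x + INR n) = f x.
Proof.
intros Hp n; induction n as [|n IH]; intro x.
- simpl; rewrite Rplus_0_r; auto.
- rewrite S_INR. replace (x + (INR n + 1)) with ((x + INR n) + 1) by ring.
  rewrite Hp; auto.
Qed.

Lemma per_Z f : periodic1 f -> forall k x, f (x + IZR k) = f x.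
Proof.
intros Hp k x. destruct k as [|p|p].
- simpl; rewrite Rplus_0_r; auto.
- rewrite <- positive_nat_Z, <- INR_IZR_INZ. apply per_nat; auto.
- rewrite <- (per_nat f Hp (Pos.to_nat p)).
  rewrite INR_IZR_INZ, positive_nat_Z. f_equal. rewrite <- Pos2Z.opp_pos, opp_IZR. ring.
Qed.

Lemma per_shift f : periodic1 f -> forall a y, exists x, a <= x <= a + 1 /\ f x = f y.
Proof.
intros Hp a y. destruct (archimed (a - y)) as [H1 H2].
exists (y + IZR (up (a - y))). split; [lra|]. apply per_Z; auto.
Qed.

Lemma bound_ab f a b : a <= b -> (forall t, a <= t <= b -> continuous f t) ->
  exists B, forall t, a <= t <= b -> Rabs (f t) <= B.
Proof.
intros Hab Hc. destruct (continuity_ab_maj (fun t => Rabs (f t)) a b Hab) as [M [HM _]].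
- intros c Hc'. apply continuity_pt_filterlim.
  apply (continuous_comp f Rabs). apply Hc; auto. apply continuous_Rabs.
- exists (Rabs (f M)). auto.
Qed.

Lemma G_lip G : is_C1 G -> forall B, exists L, 0 <= L /\
  forall u v, Rabs u <= B -> Rabs v <= B -> Rabs (G u - G v) <= L * Rabs (u - v).
Proof.
intros HG B. destruct (bound_ab (Derive G) (- Rabs B) (Rabs B)) as [L HL].
- pose proof (Rabs_pos B); lra.
- intros t _. apply HG.
- exists (Rmax L 0). split; [apply Rmax_r|]. intros u v Hu Hv.
  destruct (MVT_gen G v u (Derive G)) as [c [Hc Heq]].
  + intros x _. apply Derive_correct, HG.
  + intros x _. apply continuity_pt_filterlim. apply (ex_derive_continuous G), HG.
  + rewrite Heq. rewrite Rabs_mult. apply Rmult_le_compat_r; [apply Rabs_pos|].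
    eapply Rle_trans; [apply HL|apply Rmax_l].
    assert (B <= Rabs B) by apply RRle_abs.
    apply Rabs_le_between in Hu. apply Rabs_le_between in Hv.
    split.
    * eapply Rle_trans; [|apply Hc]. apply Rmin_glb; lra.
    * eapply Rle_trans; [apply Hc|]. apply Rmax_lub; lra.
Qed.

Theorem lemma4p3 (G V : R -> R) :
  is_C1 G -> coercive G -> lipschitz V -> periodic1 V ->
  forall (theta1 theta2 : R) (f1 f2 : R -> R),
    theta1 < theta2 ->
    is_f_theta G V theta1 f1 -> is_f_theta G V theta2 f2 ->
    forall x : R, f1 x < f2 x.
Proof.
intros HG _ _ _ th1 th2 f1 f2 Hth [C1 [P1 [I1 [H1 E1]]]] [C2 [P2 [I2 [H2 E2]]]] x.
set (w := fun t => f2 t - f1 t).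
set (dw := fun t => (H2 - H1) - (G (f2 t) - G (f1 t))).
assert (Hd : forall t, is_derive w t (dw t)).
{ intro t. unfold w, dw.
  replace (H2 - H1 - (G (f2 t) - G (f1 t))) with (Derive f2 t - Derive f1 t)
    by (specialize (E1 t); specialize (E2 t); lra).
  apply (is_derive_minus f2 f1); apply Derive_correct; [apply C2|apply C1]. }
assert (Pw : periodic1 w) by (intro t; unfold w; rewrite P1, P2; auto).
assert (Cf1 : forall t, continuous f1 t) by (intro t; apply (ex_derive_continuous f1), C1).
assert (Cf2 : forall t, continuous f2 t) by (intro t; apply (ex_derive_continuous f2), C2).
assert (Hint : RInt (fun t => f1 t - f2 t) 0 1 = th1 - th2).
{ rewrite <- I1, <- I2. apply (RInt_minus f1 f2);
  apply ex_RInt_continuous; intros; auto. }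
assert (Hallneg : forall a, (forall t, a <= t <= a + 1 -> w t <= 0) -> False).
{ intros a Ha. assert (0 <= RInt (fun t => f1 t - f2 t) 0 1).
  { apply RInt_ge_0; [lra| |].
    - apply (ex_RInt_continuous (V:=R_CompleteNormedModule)); intros. apply (continuous_minus f1 f2); auto.
    - intros t Ht. destruct (per_shift w Pw a t) as [s [Hs Hws]].
      specialize (Ha s Hs). unfold w in Hws, Ha. lra. }
  lra. }
assert (Hlip : forall a, exists L, forall t, a <= t <= a + 1 ->
          Rabs (G (f2 t) - G (f1 t)) <= L * Rabs (w t)).
{ intro a. destruct (bound_ab f1 a (a+1)) as [B1 HB1]; [lra|intros; auto|].
  destruct (bound_ab f2 a (a+1)) as [B2 HB2]; [lra|intros; auto|].
  destruct (G_lip G HG (Rmax B1 B2)) as [L [_ HL]].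
  exists L. intros t Ht. apply HL.
  - eapply Rle_trans; [apply HB2; auto|apply Rmax_r].
  - eapply Rle_trans; [apply HB1; auto|apply Rmax_l]. }
destruct (Rle_lt_dec (H2 - H1) 0) as [HH|HH].
- apply Rnot_le_lt. intro Hx.
  destruct (Hlip x) as [L HL].
  apply (Hallneg x). apply (lemK w dw x L Hd).
  + unfold w; lra.
  + intros t Ht Hw. specialize (HL t Ht). rewrite (Rabs_pos_eq (w t)) in HL by lra.
    unfold dw. pose proof (Rle_abs (G (f2 t) - G (f1 t))). 
    pose proof (Rabs_Ropp (G (f2 t) - G (f1 t))). pose proof (Rle_abs (- (G (f2 t) - G (f1 t)))).
    lra.
- destruct (classic (exists y, 0 < w y)) as [[y Hy]|Hny].
  2: { exfalso. apply (Hallneg 0). intros t _. apply Rnot_lt_le. intro; apply Hny; eauto. }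
  destruct (Hlip y) as [L HL].
  assert (Hpos : forall t, y <= t <= y + 1 -> - w t <= 0).
  { apply (lemK (fun t => - w t) (fun t => - dw t) y L).
    - intro t. apply (is_derive_opp w). apply Hd.
    - lra.
    - intros t Ht Hw. specialize (HL t Ht). rewrite (Rabs_left (w t)) in HL by lra.
      unfold dw. pose proof (Rle_abs (G (f2 t) - G (f1 t))). lra. }
  assert (Hall : forall t, 0 <= w t).
  { intro t. destruct (per_shift w Pw y t) as [s [Hs Hws]]. rewrite <- Hws.
    specialize (Hpos s Hs). lra. }
  apply Rnot_le_lt. intro Hx.
  assert (Hw0 : w x = 0) by (specialize (Hall x); unfold w in *; lra).
  pose (pr := exist (fun l => derivable_pt_abs w x l) (dw x)
                 (proj1 (is_derive_Reals w x (dw x)) (Hd x))).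
  assert (Hz : derive_pt w x pr = 0).
  { apply (deriv_minimum w (x - 1) (x + 1) x pr); try lra.
    intros t _ _. rewrite Hw0. apply Hall. }
  simpl in Hz. unfold dw in Hz.
  assert (f2 x = f1 x) by (unfold w in Hw0; lra).
  rewrite H in Hz. lra.
Qed.
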